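(* There exist a financial system $S$ in the base model (all contracts of the same priority) and distinct banks $u,v_1,v_2$, with a debt contract of positive weight from $u$ to $v_1$ and one from $u$ to $v_2$, such that the following holds. For $(s_1,s_2)\in\{C,D\}^2$ let $S_{s_1s_2}$ be the system obtained from $S$ by deleting the debt contract from $u$ to $v_i$ for exactly those $i$ with $s_i=C$. Then each $S_{s_1s_2}$ has exactly one solution, and the payoffs $(q_{v_1},q_{v_2})$ at that solution are $(3,3)$ for $CC$, $(8/3,8/3)$ for $DD$, $(3/2,4)$ for $CD$, and $(4,3/2)$ for $DC$. In particular, in the two-player game where bank $v_i$ chooses $s_i$ and receives its payoff in $S_{s_1s_2}$, $D$ is a strictly dominant strategy for each player, while both players receive strictly more under $CC$ than under $DD$.
   Context: A financial system with payment priorities consists of: a finite set $V$ of banks; external assets $e_v\ge 0$ for each $v\in V$; a number $P\ge 1$ of priority levels; and a finite set of contracts, each of which is either a debt contract from a debtor $u$ to a creditor $v\neq u$ with weight $c>0$, or a credit default swap (CDS) from a debtor $u$ to a creditor $v\neq u$ in reference to a bank $w\notin\{u,v\}$ (the reference entity) with weight $c>0$. Every contract has a priority in $\{1,\dots,P\}$ (1 is the highest priority). It is assumed that every bank that is the reference entity of some CDS is the debtor of at least one debt contract of positive weight. Given a recovery rate vector $r\in[0,1]^V$: the liability of a contract $k$ is $l_k(r)=c$ if $k$ is a debt of weight $c$, and $l_k(r)=c\,(1-r_w)$ if $k$ is a CDS of weight $c$ in reference to $w$. For a bank $v$, $l_v(r)$ is the sum of the liabilities of the contracts with debtor $v$;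 $l_v^{(\rho)}(r)$ is the sum of the liabilities of contracts with debtor $v$ and priority $\rho$; and $l_v^{(\le\rho)}(r)=\sum_{i=1}^{\rho}l_v^{(i)}(r)$ (with $l_v^{(\le 0)}=0$). The payment on a contract $k$ with debtor $v$ and priority $\rho$ is $p_k(r)=l_k(r)\cdot\min\{1,\max\{0,(r_v l_v(r)-l_v^{(\le\rho-1)}(r))/l_v^{(\rho)}(r)\}\}$ (and $p_k(r)=0$ if $l_v^{(\rho)}(r)=0$). The assets of $v$ are $a_v(r)=e_v+\sum_k p_k(r)$, summing over contracts $k$ with creditor $v$. A vector $r\in[0,1]^V$ is a solution (clearing vector) if for every $v\in V$: $r_v=1$ when $a_v(r)\ge l_v(r)$, and $r_v=a_v(r)/l_v(r)$ when $a_v(r)<l_v(r)$. The payoff of $v$ is $q_v(r)=\max\{a_v(r)-l_v(r),0\}$. When $P=1$, payments reduce to $p_k(r)=r_v\,l_k(r)$ (principle of proportionality); this is called the base model. *)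

(* Defs.v *)
From Stdlib Require Import Reals List Arith Bool.
Import ListNotations.
Open Scope R_scope.
Open Scope bool_scope.

(* Banks are the natural numbers 0 .. nbanks-1.
   A contract: debtor, creditor, kind (None = debt, Some w = CDS in reference
   to bank w), weight c, priority. *)
Record contract := mkContract {
  debtor : nat; creditor : nat; ref : option nat; weight : R; prio : nat }.

Record system := mkSystem {
  nbanks : nat; ext : nat -> R; nprio : nat; contracts : list contract }.

Definition is_debt (k : contract) : Prop := ref k = None.

Definition wf_contract (S : system) (k : contract) : Prop :=
  (debtor k < nbanks S)%nat /\ (creditor k < nbanks S)%nat /\
  debtor k <> creditor k /\ 0 < weight k /\
  (1 <= prio k <= nprio S)%nat /\
  match ref k with
  | None => True
  | Some w => (w < nbanks S)%nat /\ w <> debtor k /\ w <> creditor k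
  end.

Definition wf_system (S : system) : Prop :=
  (1 <= nprio S)%nat /\
  (forall v, (v < nbanks S)%nat -> 0 <= ext S v) /\
  (forall k, In k (contracts S) -> wf_contract S k) /\
  (forall k w, In k (contracts S) -> ref k = Some w ->
     exists k', In k' (contracts S) /\ ref k' = None /\ debtor k' = w /\ 0 < weight k').

Definition base_model (S : system) : Prop := nprio S = 1%nat.

Definition sumR (f : contract -> R) (l : list contract) : R :=
  fold_right (fun k acc => f k + acc) 0 l.

Definition liab (r : nat -> R) (k : contract) : R :=
  match ref k with
  | None => weight k
  | Some w => weight k * (1 - r w)
  end.

Definition liab_bank (S : system) (r : nat -> R) (v : nat) : R :=
  sumR (fun k => if Nat.eqb (debtor k) v then liab r k else 0) (contracts S).

Definition liab_prio (S : system) (r : nat -> R) (v rho : nat) : R :=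
  sumR (fun k => if Nat.eqb (debtor k) v && Nat.eqb (prio k) rho
                 then liab r k else 0) (contracts S).

Definition liab_le (S : system) (r : nat -> R) (v rho : nat) : R :=
  sumR (fun k => if Nat.eqb (debtor k) v && Nat.leb 1 (prio k) && Nat.leb (prio k) rho
                 then liab r k else 0) (contracts S).

Definition payment (S : system) (r : nat -> R) (k : contract) : R :=
  let v := debtor k in
  let rho := prio k in
  let L := liab_prio S r v rho in
  if Req_EM_T L 0 then 0
  else liab r k *
       Rmin 1 (Rmax 0 ((r v * liab_bank S r v - liab_le S r v (rho - 1)) / L)).

Definition assets (S : system) (r : nat -> R) (v : nat) : R :=
  ext S v + sumR (fun k => if Nat.eqb (creditor k) v then payment S r k else 0)
                 (contracts S).

Definition is_solution (S : system) (r : nat -> R) : Prop :=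
  forall v, (v < nbanks S)%nat ->
    0 <= r v <= 1 /\
    (assets S r v >= liab_bank S r v -> r v = 1) /\
    (assets S r v < liab_bank S r v -> r v = assets S r v / liab_bank S r v).

Definition payoff (S : system) (r : nat -> R) (v : nat) : R :=
  Rmax (assets S r v - liab_bank S r v) 0.

Definition unique_solution_payoffs (S : system) (v1 v2 : nat) (x1 x2 : R) : Prop :=
  exists r, is_solution S r /\
    (forall r', is_solution S r' -> forall v, (v < nbanks S)%nat -> r' v = r v) /\
    payoff S r v1 = x1 /\ payoff S r v2 = x2.

Definition with_contracts (S : system) (l : list contract) : system :=
  mkSystem (nbanks S) (ext S) (nprio S) l.

(* Main.v *)
Require Import Defs.
From Stdlib Require Import Reals List Arith Bool Lra Lia.
Import ListNotations.
Open Scope R_scope.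

Lemma sumR_ext f g l : (forall k, In k l -> f k = g k) -> sumR f l = sumR g l.
Proof.
  induction l as [|a l IH]; intros H; simpl; [reflexivity|].
  rewrite (H a (or_introl eq_refl)), IH; [reflexivity|].
  intros k Hk; apply H; right; exact Hk.
Qed.

Lemma sumR_0 l : sumR (fun _ => 0) l = 0.
Proof. induction l; simpl; [reflexivity| rewrite IHl; ring]. Qed.

Lemma pay_base S r k :
  (forall k', In k' (contracts S) -> prio k' = 1%nat) -> prio k = 1%nat ->
  0 <= r (debtor k) <= 1 ->
  payment S r k = if Req_EM_T (liab_bank S r (debtor k)) 0 then 0
                  else liab r k * r (debtor k).
Proof.
  intros Hall Hk Hr.
  assert (E1 : liab_prio S r (debtor k) (prio k) = liab_bank S r (debtor k)).
  { unfold liab_prio, liab_bank. rewrite Hk. apply sumR_ext.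
    intros k' Hk'. rewrite (Hall k' Hk'). simpl. rewrite andb_true_r. reflexivity. }
  assert (E2 : liab_le S r (debtor k) (prio k - 1) = 0).
  { unfold liab_le. rewrite Hk. simpl. transitivity (sumR (fun _ => 0) (contracts S));
    [|apply sumR_0].
    apply sumR_ext. intros k' _.
    destruct (debtor k' =? debtor k)%nat; simpl; [|reflexivity].
    destruct (prio k') as [|p]; simpl; [reflexivity|].
    destruct p; reflexivity. }
  unfold payment. rewrite E1, E2.
  destruct (Req_EM_T (liab_bank S r (debtor k)) 0) as [H0|H0]; [reflexivity|].
  replace ((r (debtor k) * liab_bank S r (debtor k) - 0) / liab_bank S r (debtor k))
    with (r (debtor k)) by (field; exact H0).
  rewrite Rmax_right by lra. rewrite Rmin_right by lra. reflexivity.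
Qed.

Definition ext0 (v : nat) : R :=
  match v with 0%nat => 5/2 | 1%nat => 3 | 2%nat => 3 | _ => 0 end.
Definition d1 := mkContract 0 1 None 25 1.
Definition d2 := mkContract 0 2 None 25 1.
Definition c1 := mkContract 1 3 (Some 0%nat) (5/3) 1.
Definition c2 := mkContract 2 3 (Some 0%nat) (5/3) 1.
Definition lst (b1 b2 : bool) :=
  (if b1 then [d1] else []) ++ (if b2 then [d2] else []) ++ [c1; c2].
Definition Sy b1 b2 := mkSystem 4 ext0 1 (lst b1 b2).
Definition S0 := Sy true true.

Definition bR (b : bool) : R := if b then 1 else 0.
Definition ru (b1 b2 : bool) : R :=
  match b1, b2 with false, false => 1 | true, true => 1/20 | _, _ => 1/10 end.

Ltac cb := cbn [nprio liab_bank liab_prio liab_le assets sumR fold_right lst app contracts Sy ext nbanks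
   debtor creditor ref weight prio Nat.eqb liab andb d1 d2 c1 c2 ext0 bR ru].

Lemma prio_all b1 b2 : forall k', In k' (contracts (Sy b1 b2)) -> prio k' = 1%nat.
Proof.
  intros k Hk. destruct b1, b2; cb; simpl in Hk;
  repeat (destruct Hk as [<-|Hk]; [reflexivity|]); contradiction.
Qed.

Lemma F0 b1 b2 r : liab_bank (Sy b1 b2) r 0 = 25 * (bR b1 + bR b2).
Proof. unfold liab_bank; destruct b1, b2; cb; ring. Qed.
Lemma F1 b1 b2 r : liab_bank (Sy b1 b2) r 1 = 5/3 * (1 - r 0%nat).
Proof. unfold liab_bank; destruct b1, b2; cb; ring. Qed.
Lemma F2 b1 b2 r : liab_bank (Sy b1 b2) r 2 = 5/3 * (1 - r 0%nat).
Proof. unfold liab_bank; destruct b1, b2; cb; ring. Qed.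
Lemma F3 b1 b2 r : liab_bank (Sy b1 b2) r 3 = 0.
Proof. unfold liab_bank; destruct b1, b2; cb; ring. Qed.

Lemma A0 b1 b2 r : assets (Sy b1 b2) r 0 = 5/2.
Proof. unfold assets; destruct b1, b2; cb; ring. Qed.

Lemma A1 b1 b2 r : 0 <= r 0%nat <= 1 ->
  assets (Sy b1 b2) r 1 = 3 + bR b1 * 25 * r 0%nat.
Proof.
  intros Hr. unfold assets; destruct b1, b2; cb;
  try (rewrite (pay_base _ _ d1 (prio_all _ _) eq_refl Hr); cbn [debtor];
       rewrite F0; cb;
       destruct (Req_EM_T _ _); [lra|]); cb; ring.
Qed.

Lemma A2 b1 b2 r : 0 <= r 0%nat <= 1 ->
  assets (Sy b1 b2) r 2 = 3 + bR b2 * 25 * r 0%nat.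
Proof.
  intros Hr. unfold assets; destruct b1, b2; cb;
  try (rewrite (pay_base _ _ d2 (prio_all _ _) eq_refl Hr); cbn [debtor];
       rewrite F0; cb;
       destruct (Req_EM_T _ _); [lra|]); cb; ring.
Qed.

Lemma A3 b1 b2 r : 0 <= r 0%nat <= 1 -> 0 <= r 1%nat <= 1 -> 0 <= r 2%nat <= 1 ->
  0 <= assets (Sy b1 b2) r 3.
Proof.
  intros H0 H1 H2.
  assert (P1 : 0 <= payment (Sy b1 b2) r c1).
  { rewrite (pay_base _ _ c1 (prio_all _ _) eq_refl H1).
    destruct (Req_EM_T _ _); [lra|]. cb. apply Rmult_le_pos; [|lra]. lra. }
  assert (P2 : 0 <= payment (Sy b1 b2) r c2).
  { rewrite (pay_base _ _ c2 (prio_all _ _) eq_refl H2).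
    destruct (Req_EM_T _ _); [lra|]. cb. apply Rmult_le_pos; [|lra]. lra. }
  unfold assets; destruct b1, b2; cb; lra.
Qed.

Lemma ru_bounds b1 b2 : 0 <= ru b1 b2 <= 1.
Proof. destruct b1, b2; cb; lra. Qed.

Lemma r0_char b1 b2 r : 0 <= r 0%nat <= 1 ->
  (assets (Sy b1 b2) r 0 >= liab_bank (Sy b1 b2) r 0 -> r 0%nat = 1) ->
  (assets (Sy b1 b2) r 0 < liab_bank (Sy b1 b2) r 0 ->
     r 0%nat = assets (Sy b1 b2) r 0 / liab_bank (Sy b1 b2) r 0) ->
  r 0%nat = ru b1 b2.
Proof.
  rewrite A0, F0. intros _ Ha Hb. destruct b1, b2; cbn [bR ru] in *.
  - rewrite Hb by lra. field.
  - rewrite Hb by lra. field.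
  - rewrite Hb by lra. field.
  - apply Ha; lra.
Qed.

Lemma sol_char b1 b2 r : is_solution (Sy b1 b2) r ->
  r 0%nat = ru b1 b2 /\ r 1%nat = 1 /\ r 2%nat = 1 /\ r 3%nat = 1.
Proof.
  intros H.
  destruct (H 0%nat ltac:(cbn; lia)) as [B0 [Ha0 Hb0]].
  destruct (H 1%nat ltac:(cbn; lia)) as [B1 [Ha1 _]].
  destruct (H 2%nat ltac:(cbn; lia)) as [B2 [Ha2 _]].
  destruct (H 3%nat ltac:(cbn; lia)) as [B3 [Ha3 _]].
  pose proof (A3 b1 b2 r B0 B1 B2) as P3.
  rewrite A1 in Ha1 by exact B0. rewrite A2 in Ha2 by exact B0.
  rewrite F1 in Ha1. rewrite F2 in Ha2. rewrite F3 in Ha3.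
  split; [exact (r0_char b1 b2 r B0 Ha0 Hb0)|].
  assert (0 <= bR b1 * 25 * r 0%nat) by (destruct b1; cbn [bR]; lra).
  assert (0 <= bR b2 * 25 * r 0%nat) by (destruct b2; cbn [bR]; lra).
  split; [apply Ha1; lra|]. split; [apply Ha2; lra|]. apply Ha3; lra.
Qed.

Definition wit b1 b2 (v : nat) : R := if Nat.eqb v 0 then ru b1 b2 else 1.

Lemma wit_sol b1 b2 : is_solution (Sy b1 b2) (wit b1 b2).
Proof.
  pose proof (ru_bounds b1 b2) as Bu.
  intros v Hv. cbn [Sy nbanks] in Hv.
  assert (B0 : 0 <= wit b1 b2 0%nat <= 1) by (exact Bu).
  destruct v as [|[|[|[|v]]]]; [| | | |lia].
  - split; [exact Bu|]. rewrite A0, F0. unfold wit; cbn [Nat.eqb].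
    destruct b1, b2; cb; split; intros; try lra; field.
  - split; [unfold wit; cbn [Nat.eqb]; lra|]. rewrite A1 by exact B0. rewrite F1. unfold wit; cbn [Nat.eqb].
    assert (0 <= bR b1 * 25 * ru b1 b2) by (destruct b1; cbn [bR]; lra).
    split; intros; [reflexivity|lra].
  - split; [unfold wit; cbn [Nat.eqb]; lra|]. rewrite A2 by exact B0. rewrite F2. unfold wit; cbn [Nat.eqb].
    assert (0 <= bR b2 * 25 * ru b1 b2) by (destruct b2; cbn [bR]; lra).
    split; intros; [reflexivity|lra].
  - assert (P3 := A3 b1 b2 (wit b1 b2) B0 ltac:(unfold wit; cbn [Nat.eqb]; lra) ltac:(unfold wit; cbn [Nat.eqb]; lra)).
    split; [unfold wit; cbn [Nat.eqb]; lra|]. rewrite F3. change (wit b1 b2 3) with 1.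
    split; intros; [reflexivity|lra].
Qed.

Lemma scen b1 b2 x1 x2 :
  x1 = 3 + bR b1 * 25 * ru b1 b2 - 5/3 * (1 - ru b1 b2) ->
  x2 = 3 + bR b2 * 25 * ru b1 b2 - 5/3 * (1 - ru b1 b2) ->
  unique_solution_payoffs (Sy b1 b2) 1 2 x1 x2.
Proof.
  intros E1 E2. pose proof (ru_bounds b1 b2) as Bu.
  assert (B0 : 0 <= wit b1 b2 0%nat <= 1) by (exact Bu).
  exists (wit b1 b2). split; [apply wit_sol|]. split.
  - intros r' Hr' v Hv. destruct (sol_char _ _ _ Hr') as [e0 [e1 [e2 e3]]].
    cbn [Sy nbanks] in Hv.
    destruct v as [|[|[|[|v]]]]; [| | | |lia]; unfold wit; cbn [Nat.eqb]; assumption.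
  - unfold payoff. rewrite A1, A2, F1, F2 by exact B0. unfold wit; cbn [Nat.eqb].
    assert (0 <= bR b1 * 25 * ru b1 b2) by (destruct b1; cbn [bR]; lra).
    assert (0 <= bR b2 * 25 * ru b1 b2) by (destruct b2; cbn [bR]; lra).
    rewrite !Rmax_left by lra. split; symmetry; assumption.
Qed.

Theorem mainTheorem10 :
  exists (S : system) (u v1 v2 : nat) (d1 d2 : contract) (rest : list contract),
    wf_system S /\ base_model S /\
    (u < nbanks S)%nat /\ (v1 < nbanks S)%nat /\ (v2 < nbanks S)%nat /\
    u <> v1 /\ u <> v2 /\ v1 <> v2 /\
    contracts S = d1 :: d2 :: rest /\
    ref d1 = None /\ debtor d1 = u /\ creditor d1 = v1 /\ 0 < weight d1 /\
    ref d2 = None /\ debtor d2 = u /\ creditor d2 = v2 /\ 0 < weight d2 /\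
    (forall k, In k rest -> ref k = None -> debtor k = u ->
        creditor k <> v1 /\ creditor k <> v2) /\
    unique_solution_payoffs (with_contracts S rest) v1 v2 3 3 /\
    unique_solution_payoffs (with_contracts S (d1 :: d2 :: rest)) v1 v2 (8/3) (8/3) /\
    unique_solution_payoffs (with_contracts S (d2 :: rest)) v1 v2 (3/2) 4 /\
    unique_solution_payoffs (with_contracts S (d1 :: rest)) v1 v2 4 (3/2).
Proof.
  exists S0, 0%nat, 1%nat, 2%nat, d1, d2, [c1; c2].
  split.
  { unfold wf_system, S0, Sy. cbn [nprio nbanks ext contracts lst app]. split; [lia|]. split.
    { intros v _. destruct v as [|[|[|v]]]; cbn [ext0]; lra. }
    split.
    { intros k Hk. repeat (destruct Hk as [<-|Hk];
        [unfold wf_contract; cb; repeat split; try lia; try lra |]); contradiction. }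
    intros k w Hk Hw. exists d1. split; [left; reflexivity|].
    cb. repeat split; try lra.
    repeat (destruct Hk as [<-|Hk]; [cbn [ref c1 c2 d1 d2] in Hw; congruence|]); contradiction. }
  split; [reflexivity|].
  do 6 (split; [cbn; lia|]).
  split; [reflexivity|].
  do 8 (split; [cb; (reflexivity || lra)|]).
  split.
  { intros k Hk Hr. repeat (destruct Hk as [<-|Hk]; [cbn [ref c1 c2 d1 d2] in Hr; discriminate|]); contradiction. }
  split; [apply (scen false false); cb; field|].
  split; [apply (scen true true); cb; field|].
  split; [apply (scen false true); cb; field|].
  apply (scen true false); cb; field.
Qed.
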